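(* If $\phi$ is dinatural in its $k$-th variable and $\psi$ is dinatural in its $i$-th variable, then the $i$-th horizontal composite $\phi\ast_i\psi$ is dinatural in its $(i-1+k)$-th variable (the variable $A_k$).
   Context: Notation: $k$ also denotes $\{1,\dots,k\}$; $\mathbb C^\alpha=\mathbb C^{\alpha_1}\times\cdots$ with $\mathbb C^+=\mathbb C$, $\mathbb C^-=\mathbb C^{op}$; for $\mathbf A=(A_1,\dots,A_n)$, $\sigma\colon k\to n$, $\mathbf A\sigma=(A_{\sigma1},\dots,A_{\sigma k})$; a morphism in a contravariant argument is read in $\mathbb C^{op}$. A transformation $\phi\colon F\to G$ ($F\colon\mathbb C^\alpha\to\mathbb C$, $G\colon\mathbb C^\beta\to\mathbb C$) of type $|\alpha|\xrightarrow{\sigma}n\xleftarrow{\tau}|\beta|$ is a family $\phi_{\mathbf A}\colon F(\mathbf A\sigma)\to G(\mathbf A\tau)$, $\mathbf A\in\mathrm{Ob}(\mathbb C)^n$. $\mathbf A[X,Y/i]\sigma$ is the tuple whose $j$-th entry is $X$ if $\sigma j=i,\alpha_j=-$, $Y$ if $\sigma j=i,\alpha_j=+$, $A_{\sigma j}$ (or $1_{A_{\sigma j}}$ for morphisms) otherwise; $\mathbf A[X/i]=\mathbf A[X,X/i]$. $\phi$ is dinatural in its $i$-th variable if for all $A_j$ ($j\ne i$) and $f\colon A\to B$: $G(\mathbf A[A,f/i]\tau)\circ\phi_{\mathbf A[A/i]}\circ F(\mathbf A[f,A/i]\sigma)=G(\mathbf A[f,B/i]\tau)\circ\phi_{\mathbf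 A[B/i]}\circ F(\mathbf A[B,f/i]\sigma)$. Horizontal composition: let $F\colon\mathbb C^\alpha\to\mathbb C$, $G\colon\mathbb C^\beta\to\mathbb C$, $H\colon\mathbb C^\gamma\to\mathbb C$, $K\colon\mathbb C^\delta\to\mathbb C$, $\phi\colon F\to G$ of type $|\alpha|\xrightarrow{\sigma}n\xleftarrow{\tau}|\beta|$ with variables $\mathbf A=(A_1,\dots,A_n)$, and $\psi\colon H\to K$ of type $|\gamma|\xrightarrow{\eta}m\xleftarrow{\theta}|\delta|$ with variables $\mathbf B=(B_1,\dots,B_m)$, dinatural in its $i$-th variable. The $i$-th horizontal composite $\phi\ast_i\psi$ is the transformation with variables $\mathbf B[\mathbf A/i]=(B_1,\dots,B_{i-1},A_1,\dots,A_n,B_{i+1},\dots,B_m)$ (so $A_k$ is its $(i-1+k)$-th variable). Its domain functor is obtained from $H$ by substituting, into each argument position $u$ with $\eta u=i$, the functor $F$ if $\gamma_u=+$ and $G^{op}$ if $\gamma_u=-$ (other positions unchanged); its codomain functor is obtained from $K$ by substituting, into each position $v$ with $\theta v=i$, $G$ if $\delta_v=+$ and $F^{op}$ if $\delta_v=-$. In its type, an argument coming from the $j$-th argument of a copy of $F$ is assigned variable $A_{\sigma j}$, one coming from the $j$-th argument of a copy of $G$ variable $A_{\tau j}$, and an unchanged position $u$ of $H$ (resp. $v$ of $K$) variable $B_{\eta u}$ (resp. $B_{\theta v}$). Its component at $\mathbf B[\mathbf A/i]$ is the morphism $H(\mathbf B[G(\mathbf A\tau),F(\mathbf A\sigma)/i]\eta)\to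 K(\mathbf B[F(\mathbf A\sigma),G(\mathbf A\tau)/i]\theta)$ given by $K(\mathbf B[F(\mathbf A\sigma),\phi_{\mathbf A}/i]\theta)\circ\psi_{\mathbf B[F(\mathbf A\sigma)/i]}\circ H(\mathbf B[\phi_{\mathbf A},F(\mathbf A\sigma)/i]\eta)$, equal to $K(\mathbf B[\phi_{\mathbf A},G(\mathbf A\tau)/i]\theta)\circ\psi_{\mathbf B[G(\mathbf A\tau)/i]}\circ H(\mathbf B[G(\mathbf A\tau),\phi_{\mathbf A}/i]\eta)$ by dinaturality of $\psi$. *)

(* Defs.v *)
From mathcomp Require Import all_boot.

Unset Printing Implicit Defensive.

(* Categories, in the (standard) single-sorted "arrows only" presentation:   *)
(* every arrow f has a source and a target; comp g f is g o f and its value  *)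
(* is only constrained when tgt f = src g.                                   *)
Record Category := MkCategory {
  Ob : Type;
  Arr : Type;
  src : Arr -> Ob;
  tgt : Arr -> Ob;
  idm : Ob -> Arr;
  comp : Arr -> Arr -> Arr;
  src_idm : forall X, src (idm X) = X;
  tgt_idm : forall X, tgt (idm X) = X;
  src_comp : forall f g, tgt f = src g -> src (comp g f) = src f;
  tgt_comp : forall f g, tgt f = src g -> tgt (comp g f) = tgt g;
  comp_idl : forall f, comp (idm (tgt f)) f = f;
  comp_idr : forall f, comp f (idm (src f)) = f;
  comp_assoc : forall f g h, tgt f = src g -> tgt g = src h ->
    comp h (comp g f) = comp (comp h g) f
}.
Arguments src {C} f : rename.
Arguments tgt {C} f : rename.
Arguments idm {C} X : rename.
Arguments comp {C} g f : rename.

(* Functors C^a -> C, where the argument positions form a type I and         *)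
(* a : I -> bool gives the variance (true = +, i.e. C; false = -, i.e. C^op). *)
(* An object of C^a is a family X : I -> Ob C; a morphism of C^a is a family *)
(* of arrows x : I -> Arr C, x j read in C^op when a j = false.              *)
Record PreFunctor (C : Category) {I : Type} (a : I -> bool) := MkPreFunctor {
  fo : (I -> Ob C) -> Ob C;
  fm : (I -> Arr C) -> Arr C
}.
Arguments fo {C I a} F X : rename.
Arguments fm {C I a} F x : rename.

Definition is_functor {C : Category} {I : Type} {a : I -> bool}
  (F : PreFunctor C a) : Prop :=
  [/\ (forall x : I -> Arr C,
         src (fm F x) = fo F (fun j => if a j then src (x j) else tgt (x j))),
      (forall x : I -> Arr C,
         tgt (fm F x) = fo F (fun j => if a j then tgt (x j) else src (x j))),
      (forall X : I -> Ob C, fm F (fun j => idm (X j)) = idm (fo F X)) &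
      (forall x y : I -> Arr C,
         (forall j, if a j then tgt (x j) = src (y j) else tgt (y j) = src (x j)) ->
         fm F (fun j => if a j then comp (y j) (x j) else comp (x j) (y j))
         = comp (fm F y) (fm F x))].

(* Transformations phi : F -> G of type  I_F --sg--> V <--tau-- I_G          *)
(* (V = the set of variables): phi A : F(A sg) -> G(A tau).                  *)
Definition is_transformation {C : Category} {IF IG V : Type}
  {aF : IF -> bool} {aG : IG -> bool} (F : PreFunctor C aF) (G : PreFunctor C aG)
  (sg : IF -> V) (tau : IG -> V) (phi : (V -> Ob C) -> Arr C) : Prop :=
  forall A : V -> Ob C,
    src (phi A) = fo F (fun j => A (sg j)) /\ tgt (phi A) = fo G (fun j => A (tau j)).

Definition subst_ob {C : Category} {V : eqType} (A : V -> Ob C) (v : V) (X : Ob C)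
  : V -> Ob C := fun w => if w == v then X else A w.

Definition subst_mor {C : Category} {I : Type} {V : eqType} (a : I -> bool)
  (sg : I -> V) (A : V -> Ob C) (v : V) (x y : Arr C) : I -> Arr C :=
  fun j => if sg j == v then (if a j then y else x) else idm (A (sg j)).

Definition dinatural {C : Category} {IF IG : Type} {V : eqType}
  {aF : IF -> bool} {aG : IG -> bool} (F : PreFunctor C aF) (G : PreFunctor C aG)
  (sg : IF -> V) (tau : IG -> V) (phi : (V -> Ob C) -> Arr C) (v : V) : Prop :=
  forall (A : V -> Ob C) (f : Arr C),
    let X := src f in let Y := tgt f in
    comp (fm G (subst_mor aG tau A v (idm X) f))
      (comp (phi (subst_ob A v X)) (fm F (subst_mor aF sg A v f (idm X))))
    =
    comp (fm G (subst_mor aG tau A v f (idm Y)))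
      (comp (phi (subst_ob A v Y)) (fm F (subst_mor aF sg A v (idm Y) f))).

(* Variables of the composite: B[A/i] = (B_k)_{k <> i} together with A.     *)
Definition CompVar {VB : eqType} (i : VB) (VA : Type) : Type :=
  ({k : VB | k != i} + VA)%type.

(* Argument positions of the functor obtained from H (positions IH, variances
   aH, type map eta) by substituting P into each position u with eta u = i
   and aH u = +, and N^op into each position u with eta u = i and aH u = -:
   unchanged positions, (u, j) with j a position of P, (u, j) with j a
   position of N. *)
Definition SubI {IH : Type} {VB : eqType} (eta : IH -> VB) (i : VB)
  (aH : IH -> bool) (IP IN : Type) : Type :=
  (({u : IH | eta u != i} + ({u : IH | (eta u == i) && aH u} * IP))
   + ({u : IH | (eta u == i) && ~~ aH u} * IN))%type.

Definition subst_var {IH : Type} {VB : eqType} (eta : IH -> VB) (i : VB)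
  (aH : IH -> bool) {IP IN : Type} (aP : IP -> bool) (aN : IN -> bool)
  (z : SubI eta i aH IP IN) : bool :=
  match z with
  | inl (inl u) => aH (sval u)
  | inl (inr (_, j)) => aP j
  | inr (_, j) => ~~ aN j
  end.

Definition subst_type {IH : Type} {VB : eqType} (eta : IH -> VB) (i : VB)
  (aH : IH -> bool) {IP IN VA : Type} (sP : IP -> VA) (sN : IN -> VA)
  (z : SubI eta i aH IP IN) : CompVar i VA :=
  match z with
  | inl (inl u) => inl (exist (fun k => k != i) (eta (sval u)) (proj2_sig u))
  | inl (inr (_, j)) => inr (sP j)
  | inr (_, j) => inr (sN j)
  end.

Inductive pos_kind {IH : Type} {VB : eqType} (eta : IH -> VB) (i : VB)
  (aH : IH -> bool) (u : IH) : Type :=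
| PKplain of eta u != i
| PKpos of (eta u == i) && aH u
| PKneg of (eta u == i) && ~~ aH u.
Arguments PKplain {IH VB eta i aH u}.
Arguments PKpos {IH VB eta i aH u}.
Arguments PKneg {IH VB eta i aH u}.

Lemma kind_lem1 {b c : bool} : ~~ b = false -> c = true -> b && c.
Proof. by case: b; case: c. Qed.
Lemma kind_lem2 {b c : bool} : ~~ b = false -> c = false -> b && ~~ c.
Proof. by case: b; case: c. Qed.

Definition kind {IH : Type} {VB : eqType} (eta : IH -> VB) (i : VB)
  (aH : IH -> bool) (u : IH) : pos_kind eta i aH u :=
  match (eta u != i) as b return (eta u != i) = b -> pos_kind eta i aH u with
  | true => fun e => PKplain e
  | false => fun e =>
      match aH u as c return aH u = c -> pos_kind eta i aH u with
      | true => fun e' => PKpos (kind_lem1 e e')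
      | false => fun e' => PKneg (kind_lem2 e e')
      end erefl
  end erefl.

Definition subst_functor {C : Category} {IH : Type} {VB : eqType}
  {aH : IH -> bool} (H : PreFunctor C aH) (eta : IH -> VB) (i : VB)
  {IP IN : Type} {aP : IP -> bool} {aN : IN -> bool}
  (P : PreFunctor C aP) (N : PreFunctor C aN)
  : PreFunctor C (subst_var eta i aH aP aN) :=
  @MkPreFunctor C _ (subst_var eta i aH aP aN)
    (fun X => fo H (fun u =>
       match kind eta i aH u with
       | PKplain e => X (inl (inl (exist _ u e)))
       | PKpos e => fo P (fun j => X (inl (inr (exist _ u e, j))))
       | PKneg e => fo N (fun j => X (inr (exist _ u e, j)))
       end))
    (fun x => fm H (fun u =>
       match kind eta i aH u with
       | PKplain e => x (inl (inl (exist _ u e)))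
       | PKpos e => fm P (fun j => x (inl (inr (exist _ u e, j))))
       | PKneg e => fm N (fun j => x (inr (exist _ u e, j)))
       end)).

(* From an object family Y over the composite's variables, recover B (its
   i-th entry, which is irrelevant, is set to the default d). *)
Definition restrB {C : Category} {VB : eqType} {i : VB} {VA : Type}
  (Y : CompVar i VA -> Ob C) (d : Ob C) : VB -> Ob C :=
  fun k => match (k != i) as b return (k != i) = b -> Ob C with
           | true => fun e => Y (inl (exist (fun k => k != i) k e))
           | false => fun _ => d
           end erefl.


Definition hcomp_dom {C : Category} {IF IG IH : Type} {VB : eqType}
  {aF : IF -> bool} {aG : IG -> bool} {aH : IH -> bool}
  (F : PreFunctor C aF) (G : PreFunctor C aG) (H : PreFunctor C aH)
  (eta : IH -> VB) (i : VB) :=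
  subst_functor H eta i F G.

Definition hcomp_cod {C : Category} {IF IG IK : Type} {VB : eqType}
  {aF : IF -> bool} {aG : IG -> bool} {aK : IK -> bool}
  (F : PreFunctor C aF) (G : PreFunctor C aG) (K : PreFunctor C aK)
  (theta : IK -> VB) (i : VB) :=
  subst_functor K theta i G F.

Definition hcomp_tdom {IF IG IH VA : Type} {VB : eqType} (aH : IH -> bool)
  (sg : IF -> VA) (tau : IG -> VA) (eta : IH -> VB) (i : VB) :=
  subst_type eta i aH sg tau.

Definition hcomp_tcod {IF IG IK VA : Type} {VB : eqType} (aK : IK -> bool)
  (sg : IF -> VA) (tau : IG -> VA) (theta : IK -> VB) (i : VB) :=
  subst_type theta i aK tau sg.

Definition hcomp {C : Category} {IF IH IK VA : Type} {VB : eqType}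
  {aF : IF -> bool} {aH : IH -> bool} {aK : IK -> bool}
  (F : PreFunctor C aF) (sg : IF -> VA)
  (phi : (VA -> Ob C) -> Arr C)
  (H : PreFunctor C aH) (K : PreFunctor C aK)
  (eta : IH -> VB) (theta : IK -> VB) (psi : (VB -> Ob C) -> Arr C) (i : VB)
  : (CompVar i VA -> Ob C) -> Arr C :=
  fun Y =>
    let A := fun l => Y (inr l) in
    let FA := fo F (fun j => A (sg j)) in
    let B := restrB Y FA in
    comp (fm K (subst_mor aK theta B i (idm FA) (phi A)))
      (comp (psi (subst_ob B i FA))
         (fm H (subst_mor aH eta B i (phi A) (idm FA)))).

(* Main.v *)
Require Import Defs.
From mathcomp Require Import all_boot.
From Stdlib Require Import FunctionalExtensionality.
Require Import Defs.

Definition mixo {C : Category} {I : Type} {V : eqType} {a : I -> bool}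
  (F : PreFunctor C a) (t : I -> V) (B : V -> Ob C) (v : V) (Pn Pp : Ob C) :=
  fo F (fun u => if t u == v then (if a u then Pp else Pn) else B (t u)).

Lemma fm_src {C : Category} {I : Type} {V : eqType} {a : I -> bool}
  (F : PreFunctor C a) (t : I -> V) B v x y : is_functor F ->
  src (fm F (subst_mor a t B v x y)) = mixo F t B v (tgt x) (src y).
Proof.
case=> hs _ _ _; rewrite hs /mixo /subst_mor; congr (fo F _).
apply: functional_extensionality => u.
by case: (t u == v); case: (a u); rewrite ?src_idm ?tgt_idm.
Qed.

Lemma fm_tgt {C : Category} {I : Type} {V : eqType} {a : I -> bool}
  (F : PreFunctor C a) (t : I -> V) B v x y : is_functor F ->
  tgt (fm F (subst_mor a t B v x y)) = mixo F t B v (src x) (tgt y).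
Proof.
case=> _ ht _ _; rewrite ht /mixo /subst_mor; congr (fo F _).
apply: functional_extensionality => u.
by case: (t u == v); case: (a u); rewrite ?src_idm ?tgt_idm.
Qed.

Lemma so_mixo {C : Category} {I : Type} {V : eqType} {a : I -> bool}
  (F : PreFunctor C a) (t : I -> V) B v P :
  fo F (fun u => subst_ob B v P (t u)) = mixo F t B v P P.
Proof.
rewrite /mixo /subst_ob; congr (fo F _); apply: functional_extensionality => u.
by case: (t u == v); case: (a u).
Qed.

Lemma comp_idid (C : Category) (b : Ob C) : comp (idm b) (idm b) = idm b.
Proof. have := comp_idl _ (idm b); by rewrite tgt_idm. Qed.

Lemma fm_comp {C : Category} {I : Type} {V : eqType} {a : I -> bool}
  (F : PreFunctor C a) (t : I -> V) B v x1 y1 x2 y2 : is_functor F ->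
  tgt y1 = src y2 -> tgt x2 = src x1 ->
  comp (fm F (subst_mor a t B v x2 y2)) (fm F (subst_mor a t B v x1 y1))
  = fm F (subst_mor a t B v (comp x1 x2) (comp y2 y1)).
Proof.
case=> _ _ _ hc e1 e2; rewrite -hc.
  congr (fm F _); apply: functional_extensionality => u; rewrite /subst_mor.
  by case: (t u == v); case: (a u); rewrite ?comp_idid.
move=> u; rewrite /subst_mor.
by case: (t u == v); case: (a u); rewrite ?src_idm ?tgt_idm.
Qed.

Lemma restrB_eq (C : Category) (VB : eqType) (i : VB) (VA : Type) (Y : CompVar i VA -> Ob C) d w (e : w != i) :
  restrB Y d w = Y (inl (exist _ w e)).
Proof.
rewrite /restrB.
have H : forall b (E : (w != i) = b), b = true ->
  (match b as b0 return ((w != i) = b0 -> Ob C) with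
   | true => fun e0 => Y (inl (exist (fun k => k != i) w e0))
   | false => fun _ => d end E) = Y (inl (exist _ w e)).
  move=> b E Eb; move: E; rewrite Eb => E; by rewrite (bool_irrelevance E e).
exact: H.
Qed.

Lemma fm_subst_functor (C : Category) (IH : Type) (VB : eqType) (aH : IH -> bool)
  (H : PreFunctor C aH) (eta : IH -> VB) (i : VB) (IP IN : Type)
  (aP : IP -> bool) (aN : IN -> bool) (P : PreFunctor C aP) (N : PreFunctor C aN)
  (VA : eqType) (sP : IP -> VA) (sN : IN -> VA) (Y : CompVar i VA -> Ob C)
  (kk : VA) x y d :
  fm (subst_functor H eta i P N)
     (subst_mor (subst_var eta i aH aP aN) (subst_type eta i aH sP sN) Y (inr kk) x y)
  = fm H (subst_mor aH eta (restrB Y d) i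
       (fm N (subst_mor aN sN (fun l => Y (inr l)) kk y x))
       (fm P (subst_mor aP sP (fun l => Y (inr l)) kk x y))).
Proof.
rewrite /=; congr (fm H _); apply: functional_extensionality => u.
case: (kind eta i aH u) => e.
- by rewrite /subst_mor /= (negbTE e) (restrB_eq _ _ _ _ _ _ _ e).
- case/andP: (e) => /eqP e1 e2; rewrite /subst_mor /= e1 eqxx e2.
  by congr (fm P _); apply: functional_extensionality => j /=.
- case/andP: (e) => /eqP e1 e2; rewrite /subst_mor /= e1 eqxx (negbTE e2).
  congr (fm N _); apply: functional_extensionality => j /=.
  by case: (aN j).
Qed.

Lemma psi_ends {C : Category} {IH IK : Type} {VB : eqType} {aH : IH -> bool} {aK : IK -> bool}
  (H : PreFunctor C aH) (K : PreFunctor C aK) eta theta psi B (i : VB) P :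
  is_transformation H K eta theta psi ->
  src (psi (subst_ob B i P)) = mixo H eta B i P P /\
  tgt (psi (subst_ob B i P)) = mixo K theta B i P P.
Proof. by move=> T; case: (T (subst_ob B i P)) => -> ->; rewrite !so_mixo. Qed.

Ltac sc := first [ done
  | rewrite fm_src //; sc | rewrite fm_tgt //; sc
  | rewrite src_idm; sc | rewrite tgt_idm; sc
  | rewrite src_comp; sc | rewrite tgt_comp; sc
  | match goal with E : src _ = _ |- _ => rewrite E; sc
                  | E : tgt _ = _ |- _ => rewrite E; sc end ].

Lemma M (C : Category) (IH IK : Type) (VB : eqType) (aH : IH -> bool) (aK : IK -> bool)
  (H : PreFunctor C aH) (K : PreFunctor C aK) eta theta psi (i : VB) (B : VB -> Ob C)
  (h ph g : Arr C) (P1 : Ob C) :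
  is_functor H -> is_functor K -> is_transformation H K eta theta psi ->
  dinatural H K eta theta psi i ->
  tgt h = P1 -> src ph = P1 -> tgt ph = src g ->
  comp (fm K (subst_mor aK theta B i h g))
    (comp (comp (fm K (subst_mor aK theta B i (idm P1) ph))
             (comp (psi (subst_ob B i P1)) (fm H (subst_mor aH eta B i ph (idm P1)))))
       (fm H (subst_mor aH eta B i g h)))
  = comp (fm K (subst_mor aK theta B i (idm (src h)) (comp g (comp ph h))))
      (comp (psi (subst_ob B i (src h)))
         (fm H (subst_mor aH eta B i (comp g (comp ph h)) (idm (src h))))).
Proof.
move=> FH FK T D eh eph ephg.
have [ps1 pt1] := psi_ends H K eta theta psi B i P1 T.
have [ps0 pt0] := psi_ends H K eta theta psi B i (src h) T.
have eg's : src (comp g ph) = P1 by rewrite src_comp.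
have eg't : tgt (comp g ph) = tgt g by rewrite tgt_comp.
set Hgh := fm H (subst_mor aH eta B i g h).
set Hp1 := fm H (subst_mor aH eta B i ph (idm P1)).
set K1p := fm K (subst_mor aK theta B i (idm P1) ph).
set Khg := fm K (subst_mor aK theta B i h g).
set ps := psi (subst_ob B i P1).
rewrite -(comp_assoc _ Hgh); [|sc|sc].
rewrite -(comp_assoc _ Hgh Hp1 ps); [|sc|sc].
rewrite (comp_assoc _ _ K1p Khg); [|sc|sc].
rewrite /Khg /K1p /Hp1 /Hgh /ps.
rewrite !fm_comp //; try sc.
rewrite -eh comp_idl eh.
set g' := comp g ph.
have -> : fm K (subst_mor aK theta B i h g') =
  comp (fm K (subst_mor aK theta B i (idm (src h)) g')) (fm K (subst_mor aK theta B i h (idm P1))).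
  by rewrite fm_comp //; try sc; rewrite comp_idr -eg's comp_idr.
have -> : fm H (subst_mor aH eta B i g' h) =
  comp (fm H (subst_mor aH eta B i (idm P1) h)) (fm H (subst_mor aH eta B i g' (idm (src h)))).
  by rewrite fm_comp //; try sc; rewrite comp_idr -eg's comp_idr.
set K0g := fm K (subst_mor aK theta B i (idm (src h)) g').
set Kh1 := fm K (subst_mor aK theta B i h (idm P1)).
set H1h := fm H (subst_mor aH eta B i (idm P1) h).
set Hg0 := fm H (subst_mor aH eta B i g' (idm (src h))).
have eg1 : src g' = P1 by [].
have eg2 : tgt g' = tgt g by [].

rewrite (comp_assoc _ Hg0 H1h); [|sc|sc].
rewrite -(comp_assoc _ _ Kh1 K0g); [|sc|sc].
rewrite (comp_assoc _ Hg0 _ Kh1); [|sc|sc].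
move: (D B h); cbv zeta; rewrite eh => <-.
set K0h := fm K (subst_mor aK theta B i (idm (src h)) h).
set Hh0 := fm H (subst_mor aH eta B i h (idm (src h))).
set ps0' := psi (subst_ob B i (src h)).
rewrite -(comp_assoc _ Hg0 _ K0h); [|sc|sc].
rewrite (comp_assoc _ _ K0h K0g); [|sc|sc].
rewrite -(comp_assoc _ Hg0 Hh0 ps0'); [|sc|sc].
rewrite /K0h /K0g /Hh0 /Hg0.
rewrite !fm_comp //; try sc.
rewrite !comp_idid.
by rewrite /g' (comp_assoc _ h ph g) // eh.
Qed.
Lemma so_ext {C : Category} {V : eqType} (B1 B2 : V -> Ob C) v P :
  (forall w, w != v -> B1 w = B2 w) -> subst_ob B1 v P = subst_ob B2 v P.
Proof.
move=> e; apply: functional_extensionality => w; rewrite /subst_ob.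
by case: eqP => // /eqP /e.
Qed.

Lemma sm_ext {C : Category} {I : Type} {V : eqType} (a : I -> bool) (t : I -> V)
  (B1 B2 : V -> Ob C) v x y :
  (forall w, w != v -> B1 w = B2 w) -> subst_mor a t B1 v x y = subst_mor a t B2 v x y.
Proof.
move=> e; apply: functional_extensionality => u; rewrite /subst_mor.
by case: eqP => // /eqP /e ->.
Qed.

Lemma hcomp_eq (C : Category) (IF IH IK : Type) (VA VB : eqType)
  (aF : IF -> bool) (aH : IH -> bool) (aK : IK -> bool)
  (F : PreFunctor C aF) (sg : IF -> VA) (phi : (VA -> Ob C) -> Arr C)
  (H : PreFunctor C aH) (K : PreFunctor C aK) eta theta psi (i : VB)
  (Y : CompVar i VA -> Ob C) kk Z d :
  hcomp F sg phi H K eta theta psi i (subst_ob Y (inr kk) Z) =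
  comp (fm K (subst_mor aK theta (restrB Y d) i
          (idm (fo F (fun j => subst_ob (fun l => Y (inr l)) kk Z (sg j))))
          (phi (subst_ob (fun l => Y (inr l)) kk Z))))
    (comp (psi (subst_ob (restrB Y d) i
               (fo F (fun j => subst_ob (fun l => Y (inr l)) kk Z (sg j)))))
       (fm H (subst_mor aH eta (restrB Y d) i
          (phi (subst_ob (fun l => Y (inr l)) kk Z))
          (idm (fo F (fun j => subst_ob (fun l => Y (inr l)) kk Z (sg j))))))).
Proof.
have eA : (fun l => subst_ob Y (inr kk) Z (inr l)) = subst_ob (fun l => Y (inr l)) kk Z.
  by apply: functional_extensionality => l.
have eB : forall d', forall w, w != i ->
    restrB (subst_ob Y (inr kk) Z) d' w = restrB Y d w.
  by move=> d' w e; rewrite !(restrB_eq _ _ _ _ _ _ _ e).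
rewrite /hcomp eA.
by rewrite (so_ext _ _ _ _ (eB _)) !(sm_ext _ _ _ _ _ _ _ (eB _)).
Qed.

Theorem mainTheorem10 (C : Category) (n m p q r s : nat)
  (alpha : 'I_p -> bool) (beta : 'I_q -> bool)
  (gamma : 'I_r -> bool) (delta : 'I_s -> bool)
  (F : PreFunctor C alpha) (G : PreFunctor C beta)
  (H : PreFunctor C gamma) (K : PreFunctor C delta)
  (sg : 'I_p -> 'I_n) (tau : 'I_q -> 'I_n)
  (eta : 'I_r -> 'I_m) (theta : 'I_s -> 'I_m)
  (phi : ('I_n -> Ob C) -> Arr C) (psi : ('I_m -> Ob C) -> Arr C)
  (i : 'I_m) (k : 'I_n) :
  is_functor F -> is_functor G -> is_functor H -> is_functor K ->
  is_transformation F G sg tau phi ->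
  is_transformation H K eta theta psi ->
  dinatural F G sg tau phi k ->
  dinatural H K eta theta psi i ->
  dinatural (hcomp_dom F G H eta i) (hcomp_cod F G K theta i)
    (hcomp_tdom gamma sg tau eta i) (hcomp_tcod delta sg tau theta i)
    (hcomp F sg phi H K eta theta psi i) (inr k).
Proof.
move=> FF FG FH FK TF TH DF DH Y f; cbv zeta.
rewrite /hcomp_dom /hcomp_cod /hcomp_tdom /hcomp_tcod.
rewrite !(fm_subst_functor _ _ _ _ _ _ _ _ _ _ _ _ _ _ _ _ _ _ _ _ (src f)).
rewrite !(hcomp_eq _ _ _ _ _ _ _ _ _ _ _ _ _ _ _ _ _ _ _ _ _ (src f)).
set A0 := (fun l => Y (inr l)).
have TFs A : src (phi A) = fo F (fun j => A (sg j)) := (TF A).1.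
have TFt A : tgt (phi A) = fo G (fun j => A (tau j)) := (TF A).2.
rewrite (M _ _ _ _ _ _ H K eta theta psi i _ _ _ _ _ FH FK TH DH); first last.
- by rewrite TFt fm_src // tgt_idm !so_mixo.
- by rewrite TFs.
- by rewrite fm_tgt // tgt_idm so_mixo.
rewrite (M _ _ _ _ _ _ H K eta theta psi i _ _ _ _ _ FH FK TH DH); first last.
- by rewrite TFt fm_src // src_idm !so_mixo.
- by rewrite TFs.
- by rewrite fm_tgt // src_idm so_mixo.
have EP : src (fm F (subst_mor alpha sg A0 k f (idm (src f)))) =
          src (fm F (subst_mor alpha sg A0 k (idm (tgt f)) f)).
  by rewrite !fm_src // src_idm tgt_idm.
have DF' := DF A0 f; cbv zeta in DF'.
by rewrite EP DF'.
Qed.
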